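(* Let $\mathcal D_{\mathrm{cost}}$ be a distribution on $\mathbb R_{\ge0}$ with mean $1$, let $n\ge1$, and let $x_1,\dots,x_n$ be i.i.d. from $\mathcal D_{\mathrm{cost}}$. Let $\Delta(x_1,\dots,x_n)$ be the minimum number of the $x_i$ that must be removed so that the sum of the remaining ones is at most $n$. Then $$\mathbb E[\Delta(x_1,\dots,x_n)]\le5\sqrt n.$$ *)

(* Defs.v *)
From HB Require Import structures.
From mathcomp Require Import all_boot all_order all_algebra.
From mathcomp Require Import all_classical all_reals all_analysis.
Set Implicit Arguments. Unset Strict Implicit. Unset Printing Implicit Defensive.
Import Order.TTheory GRing.Theory Num.Theory.
Local Open Scope classical_set_scope.
Local Open Scope ring_scope.

(* Removing everything always works,
   so the minimum is over a nonempty family (default value n is harmless). *)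
Definition Delta (R : realType) (n : nat) (x : 'I_n -> R) : nat :=
  \big[minn/n]_(S : {set 'I_n} | \sum_(i in ~: S) x i <= n%:R) #|S|.

Definition iid (R : realType) (d : measure_display) (T : measurableType d)
  (P : probability T R) (mu : probability R R) (n : nat)
  (X : 'I_n -> {RV P >-> R}) : Prop :=
  (forall i (B : set R), measurable B -> P (X i @^-1` B) = mu B) /\
  (forall B : 'I_n -> set R, (forall i, measurable (B i)) ->
     P (\bigcap_(i in [set: 'I_n]) (X i @^-1` B i)) =
     (\prod_(i < n) P (X i @^-1` B i))%E).

(* Main.v *)
Require Import Defs.
From HB Require Import structures.
From mathcomp Require Import all_boot all_order all_algebra.
From mathcomp Require Import all_classical all_reals all_analysis.
From mathcomp Require Import lra ring measurable_realfun.
Import Order.TTheory GRing.Theory Num.Theory.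
Local Open Scope classical_set_scope.
Local Open Scope ring_scope.

Local Close Scope classical_set_scope.

Lemma bigmin_le_seq (I : eqType) (r : seq I) (P : pred I) (F : I -> nat) m j :
  j \in r -> P j -> (\big[minn/m]_(i <- r | P i) F i <= F j)%N.
Proof.
elim: r => // a r IH; rewrite inE big_cons => /orP[/eqP<- ->|jr Pj].
  exact: geq_minl.
case: ifP => _; last exact: IH.
by rewrite geq_min IH ?orbT.
Qed.

Section Det.
Variables (R : realType) (n : nat) (x : 'I_n -> R).

Lemma Delta_le (S : {set 'I_n}) : \sum_(i in ~: S) x i <= n%:R ->
  (Delta x <= #|S|)%N.
Proof.
move=> HS; rewrite /Delta.
by apply: (@bigmin_le_seq _ _ (fun S => \sum_(i in ~: S) x i <= n%:R)); rewrite ?mem_index_enum.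
Qed.

Lemma Delta_le_n : (Delta x <= n)%N.
Proof.
have := @Delta_le finset.setT; rewrite cardsT card_ord; apply.
rewrite big_pred0 ?ler0n // => i; by rewrite !inE.
Qed.

Lemma exists_card m : (m <= n)%N -> exists S : {set 'I_n}, #|S| = m.
Proof.
elim: m => [|m IH] lemn; first by exists finset.set0; rewrite cards0.
have [S cS] := IH (ltnW lemn).
have : (0 < #|~: S|)%N by rewrite cardsCs finset.setCK cS card_ord subn_gt0.
case/card_gt0P => j; rewrite finset.in_setC => jS.
by exists (j |: S); rewrite cardsU1 jS cS.
Qed.


Lemma key4 k : Delta x = k.+1 -> exists tau, 0 < tau /\
  k%:R * tau + n%:R < \sum_i Num.min (Num.max (x i) 0) tau.
Proof.
move=> Hk.
have kn : (k < n)%N by rewrite -ltnS -Hk ltnS Delta_le_n.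
have [S0 cS0] := @exists_card k (ltnW kn).
pose F (S : {set 'I_n}) := \sum_(i in S) x i.
have PS0 : S0 \in [pred S : {set 'I_n} | #|S| == k] by rewrite inE /= cS0.
case: (@arg_maxP _ R _ S0 [pred S : {set 'I_n} | #|S| == k] F PS0) => S.
rewrite inE /= => /eqP cS Smax.
have rest : n%:R < \sum_(i in ~: S) x i.
  by rewrite ltNge; apply/negP => /Delta_le; rewrite Hk cS ltnn.
have : (0 < #|~: S|)%N by rewrite cardsCs finset.setCK cS card_ord subn_gt0.
case/card_gt0P => j1 j1S.
have Pj1 : j1 \in [pred j | j \in ~: S] by [].
case: (@arg_maxP _ R _ j1 [pred j | j \in ~: S] x Pj1) => j0.
rewrite inE /= => j0S j0max.
set tau := x j0.
have j0S' : j0 \notin S by rewrite -finset.in_setC.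
have sw i : i \in S -> tau <= x i.
  move=> iS; rewrite leNgt; apply/negP => lt.
  have cS' : #|j0 |: (S :\ i)| == k.
    rewrite cardsU1 finset.in_setD1 (negbTE j0S') andbF /=.
    by rewrite -cS (cardsD1 i S) iS.
  have := Smax (j0 |: (S :\ i)) cS'.
  rewrite /F big_setU1 /=; last by rewrite finset.in_setD1 (negbTE j0S') andbF.
  rewrite (big_setD1 i iS) /= lerD2r.
  by rewrite leNgt lt.
have tau0 : 0 < tau.
  rewrite ltNge; apply/negP => tau0.
  have : \sum_(i in ~: S) x i <= 0.
    apply: (@le_trans _ _ (\sum_(i in ~: S) (0:R))); last by rewrite big1_eq.
    apply: ler_sum => i iS.
    by apply: le_trans tau0; apply: j0max.
  by move=> /(lt_le_trans rest); rewrite ltNge ler0n.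
exists tau; split => //.
rewrite (bigID (fun i => i \in S)) /=.
have -> : \sum_(i | i \in S) Num.min (Num.max (x i) 0) tau = k%:R * tau.
  rewrite (eq_bigr (fun=> tau)); last first.
    move=> i iS; apply/min_idPr; rewrite le_max (sw i iS) //.
  by rewrite sumr_const cS mulr_natl.
rewrite ltrD2l (lt_le_trans rest) //.
rewrite [X in _ <= X](eq_bigl (fun i => i \in ~: S)); last by move=> i; rewrite finset.in_setC.
apply: ler_sum => i iS; rewrite le_min le_max lexx /=.
by apply: j0max.
Qed.


Definition hc (s y : R) := Num.min (Num.max y 0) s.

Definition Abound (J : nat) :=
  \sum_(j < J) 4 * Num.max (\sum_i hc (4 ^+ j.+1) (x i) - n%:R) 0 / 4 ^+ j.+1
  + (\sum_i Num.max (x i) 0) / 4 ^+ J.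

Lemma pow_split (tau : R) J : 1 < tau -> tau <= 4 ^+ J ->
  exists j : 'I_J, 4 ^+ j < tau <= 4 ^+ j.+1.
Proof.
elim: J => [|J IH] t1 tJ; first by move: tJ; rewrite expr0 leNgt t1.
have [tJ'|tJ'] := leP tau (4 ^+ J).
  by have [j Hj] := IH t1 tJ'; exists (widen_ord (leqnSn J) j).
by exists ord_max; rewrite /= tJ' tJ.
Qed.

Lemma hc_ge0 s y : 0 <= s -> 0 <= hc s y.
Proof. by move=> s0; rewrite /hc le_min le_max lexx orbT s0. Qed.

Lemma hc_le s y : hc s y <= s.
Proof. by rewrite /hc ge_min lexx orbT. Qed.

Lemma hc_mono s1 s2 y : s1 <= s2 -> hc s1 y <= hc s2 y.
Proof. by move=> h; rewrite /hc le_min2. Qed.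

Lemma hc_lemax s y : hc s y <= Num.max y 0.
Proof. by rewrite /hc ge_min lexx. Qed.

Lemma Abound_ge0 J : 0 <= \sum_(j < J) 4 * Num.max (\sum_i hc (4 ^+ j.+1) (x i) - n%:R) 0 / 4 ^+ j.+1.
Proof.
apply: sumr_ge0 => j _; apply: divr_ge0; last exact: exprn_ge0.
by apply: mulr_ge0 => //; rewrite le_max lexx orbT.
Qed.

Lemma key5 k tau J : 0 < tau -> k%:R * tau + n%:R < \sum_i hc tau (x i) ->
  k%:R < Abound J.
Proof.
move=> t0 H.
have k0 : 0 <= k%:R :> R by [].
have [t1|t1] := leP tau 1.
  have : \sum_i hc tau (x i) <= n%:R.
    apply: (@le_trans _ _ (\sum_(i < n) (1:R))); last by rewrite sumr_const card_ord.
    by apply: ler_sum => i _; apply: le_trans (hc_le _ _) t1.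
  have : 0 <= k%:R * tau by apply: mulr_ge0 => //; apply: ltW.
  lra.
have p0 m : 0 < (4:R) ^+ m by apply: exprn_gt0.
have [tJ|tJ] := leP tau (4 ^+ J); last first.
  have A0 := Abound_ge0 J.
  suff : k%:R < (\sum_i Num.max (x i) 0) / 4 ^+ J by rewrite /Abound; lra.
  rewrite ltr_pdivlMr //.
  have : \sum_i hc tau (x i) <= \sum_i Num.max (x i) 0.
    by apply: ler_sum => i _; apply: hc_lemax.
  have : k%:R * 4 ^+ J <= k%:R * tau by apply: ler_wpM2l => //; apply: ltW.
  have : 0 <= n%:R :> R by [].
  lra.
have [j /andP[jl ju]] := @pow_split tau J t1 tJ.
have B0 : 0 <= (\sum_i Num.max (x i) 0) / 4 ^+ J.
  by apply: divr_ge0; [apply: sumr_ge0 => i _; rewrite le_max lexx orbT|apply: ltW].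
set T := fun j : 'I_J => 4 * Num.max (\sum_i hc (4 ^+ j.+1) (x i) - n%:R) 0 / 4 ^+ j.+1.
have Tj : T j <= \sum_(j < J) T j.
  rewrite (bigD1 j) //= lerDl; apply: sumr_ge0 => i _; apply: divr_ge0; last exact: ltW.
  by apply: mulr_ge0 => //; rewrite le_max lexx orbT.
suff : k%:R < T j by rewrite /Abound -/T; lra.
rewrite /T ltr_pdivlMr // exprS.
have G : \sum_i hc tau (x i) <= \sum_i hc (4 ^+ j.+1) (x i).
  by apply: ler_sum => i _; apply: hc_mono.
have : k%:R * 4 ^+ j <= k%:R * tau by apply: ler_wpM2l => //; apply: ltW.
have : \sum_i hc (4 ^+ j.+1) (x i) - n%:R <= Num.max (\sum_i hc (4 ^+ j.+1) (x i) - n%:R) 0.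
  by rewrite le_max lexx.
rewrite exprS in G *.
lra.
Qed.

Lemma det_main J : (Delta x)%:R <= 1 + Abound J.
Proof.
case Hd: (Delta x) => [|k].
  rewrite /Abound; apply: addr_ge0 => //; apply: addr_ge0; first exact: Abound_ge0.
  by apply: divr_ge0; [apply: sumr_ge0 => i _; rewrite le_max lexx orbT|apply: exprn_ge0].
have [tau [t0 H]] := @key4 k Hd.
have := @key5 k tau J t0 H.
rewrite -natr1; lra.
Qed.

End Det.
Arguments hc {R}.

Local Open Scope classical_set_scope.

Section Prob.
Variables (R : realType) (d : measure_display) (T : measurableType d)
  (P : probability T R) (mu : probability R R) (n : nat)
  (X : 'I_n -> {RV P >-> R}).
Hypothesis hiid : @iid R d T P mu n X.

Lemma transfer i (f : R -> R) : measurable_fun setT f -> (forall y, 0 <= f y) ->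
  (\int[P]_w (f (X i w))%:E = \int[mu]_y (f y)%:E)%E.
Proof.
move=> mf f0.
rewrite -(@ge0_integral_distribution _ _ _ _ _ P (X i) (fun y => (f y)%:E)) //; last first.
  exact/measurable_EFinP.
apply: eq_measure_integral => A mA _.
exact: (hiid.1 i A mA).
Qed.

Lemma pair_meas i k : measurable_fun setT (fun w => (X i w, X k w)).
Proof. by apply: measurable_fun_pair. Qed.


Lemma rect i k (B C : set R) : i != k -> measurable B -> measurable C ->
  P (X i @^-1` B `&` X k @^-1` C) = (mu B * mu C)%E.
Proof.
move=> ik mB mC.
pose Bf l := if l == i then B else if l == k then C else setT.
have mBf l : measurable (Bf l) by rewrite /Bf; case: ifP => _ //; case: ifP.
have := hiid.2 Bf mBf.
have -> : \bigcap_(l in [set: 'I_n]) X l @^-1` Bf l = X i @^-1` B `&` X k @^-1` C.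
  apply/seteqP; split => w /=.
    move=> H; split.
      by have := H i Logic.I; rewrite /Bf eqxx.
    by have := H k Logic.I; rewrite /Bf eqxx eq_sym (negbTE ik).
  move=> [wB wC] l _; rewrite /Bf; case: ifP => [/eqP->//|_].
  by case: ifP => [/eqP->//|].
move=> ->.
rewrite (bigD1 i) //= (bigD1 k) /=; last by rewrite eq_sym.
rewrite big1; last first.
  move=> l /andP[li lk]; rewrite /Bf (negbTE li) (negbTE lk).
  by rewrite preimage_setT probability_setT.
rewrite mule1 /Bf eqxx eq_sym (negbTE ik) eqxx.
by rewrite (hiid.1 i B mB) (hiid.1 k C mC).
Qed.


Lemma indep2 i k (f g : R -> R) : i != k ->
  measurable_fun setT f -> measurable_fun setT g ->
  (forall y, 0 <= f y) -> (forall y, 0 <= g y) ->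
  (\int[P]_w (f (X i w) * g (X k w))%:E =
   \int[mu]_y (f y)%:E * \int[mu]_y (g y)%:E)%E.
Proof.
move=> ik mf mg f0 g0.
pose Y : {RV P >-> (R * R)%type} :=
  HB.pack (fun w => (X i w, X k w)) (isMeasurableFun.Build _ _ _ _ _ (pair_meas i k)).
pose h (z : R * R) := (f z.1 * g z.2)%:E.
have mh : measurable_fun setT h.
  apply/measurable_EFinP; apply: measurable_funM.
    exact: measurableT_comp mf measurable_fst.
  exact: measurableT_comp mg measurable_snd.
have h0 z : (0 <= h z)%E by rewrite lee_fin mulr_ge0.
have -> : (\int[P]_w (f (X i w) * g (X k w))%:E = \int[P]_w (h \o Y) w)%E by [].
rewrite -ge0_integral_distribution //.
rewrite (eq_measure_integral (mu \x mu)%E); last first.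
  move=> A mA _; apply/esym; apply: product_measure_unique => // B C mB mC.
  exact: rect.
rewrite fubini_tonelli1 //.
rewrite /fubini_F /h /=.
have E x : (\int[mu]_y (f x * g y)%:E = (f x)%:E * \int[mu]_y (g y)%:E)%E.
  rewrite -ge0_integralZl_EFin //.
  - by move=> y _; rewrite lee_fin.
  - exact/measurable_EFinP.
under eq_integral do rewrite E.
rewrite ge0_integralZr //.
- exact/measurable_EFinP.
- by move=> y _; rewrite lee_fin.
- by apply: integral_ge0 => y _; rewrite lee_fin.
Qed.


Lemma mhc (s : R) : measurable_fun setT (hc s).
Proof.
rewrite /hc; apply: measurable_minr => //; apply: measurable_maxr => //.
Qed.

Lemma mhcX (s : R) i : measurable_fun setT (fun w => hc s (X i w)).
Proof. exact: measurableT_comp (mhc s) (measurable_funPT (X i)). Qed.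

Lemma int_hc_bounds (s : R) : 0 <= s ->
  (0 <= \int[mu]_y (hc s y)%:E <= s%:E)%E.
Proof.
move=> s0; apply/andP; split.
  by apply: integral_ge0 => y _; rewrite lee_fin hc_ge0.
apply: le_trans (_ : \int[mu]_y (cst s%:E) y <= _)%E.
  apply: ge0_le_integral => //.
  - by move=> y _; rewrite lee_fin hc_ge0.
  - by apply/measurable_EFinP; exact: mhc.
  - by move=> y _; rewrite lee_fin hc_le.
rewrite integral_cst //. have H1 := probability_setT mu.
apply: (@le_trans _ _ (s%:E * 1)%E); last by rewrite mule1.
rewrite le_eqVlt; apply/orP; left; apply/eqP; congr (_ * _)%E; exact: H1.
Qed.


Lemma P_setT : P [set: T] = 1%E.
Proof. exact: probability_setT. Qed.

Lemma mYs (s : R) : measurable_fun setT (fun w => \sum_i hc s (X i w)).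
Proof. by apply: measurable_sum => i; exact: mhcX. Qed.

Lemma second (s : R) : 0 <= s ->
  (\int[P]_w ((\sum_i hc s (X i w) -
     n%:R * fine (\int[mu]_y (hc s y)%:E)) ^+ 2)%:E
   <= (n%:R * s * fine (\int[mu]_y (hc s y)%:E))%:E)%E.
Proof.
move=> s0.
set m := fine _.
have /andP[Im0 Ims] := @int_hc_bounds s s0.
have Ime : (\int[mu]_y (hc s y)%:E = m%:E)%E.
  by rewrite fineK // ge0_fin_numE // (le_lt_trans Ims) ?ltry.
have m0 : 0 <= m by rewrite -lee_fin -Ime.
have EY i : (\int[P]_w (hc s (X i w))%:E = m%:E)%E.
  by rewrite (@transfer i (hc s)) //; [exact: mhc|move=> y; exact: hc_ge0].
have EYY i k : (\int[P]_w (hc s (X i w) * hc s (X k w))%:E <=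
    (m * m + (if i == k then s * m else 0))%:E)%E.
  case: eqP => [<-|/eqP ik].
    rewrite (@transfer i (fun y => hc s y * hc s y)) //; last 2 first.
    - by apply: measurable_funM; exact: mhc.
    - by move=> y; apply: mulr_ge0; exact: hc_ge0.
    apply: (@le_trans _ _ (\int[mu]_y (s * hc s y)%:E)%E).
      apply: ge0_le_integral => //.
      - by move=> y _; rewrite lee_fin mulr_ge0 ?hc_ge0.
      - by apply/measurable_EFinP; apply: measurable_funM; exact: mhc.
      - by apply/measurable_EFinP; apply: measurable_funM => //; exact: mhc.
      - by move=> y _; rewrite lee_fin ler_wpM2r ?hc_ge0 ?hc_le.
    under eq_integral do rewrite EFinM.
    rewrite ge0_integralZl_EFin //; last 2 first.
    - by move=> y _; rewrite lee_fin hc_ge0.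
    - by apply/measurable_EFinP; exact: mhc.
    rewrite Ime -EFinM lee_fin.
    have : 0 <= m * m by apply: mulr_ge0.
    lra.
  rewrite indep2 //; last 4 first.
  - exact: mhc.
  - exact: mhc.
  - by move=> y; exact: hc_ge0.
  - by move=> y; exact: hc_ge0.
  by rewrite Ime -EFinM addr0.
set Y := fun w => \sum_i hc s (X i w).
have Y0 w : 0 <= Y w by apply: sumr_ge0 => i _; exact: hc_ge0.
have mY : measurable_fun setT Y by exact: mYs.
have EYsum : (\int[P]_w (Y w)%:E = (n%:R * m)%:E)%E.
  under eq_integral do rewrite /Y -sumEFin.
  rewrite ge0_integral_sum //; last 2 first.
  - by move=> i; apply/measurable_EFinP; exact: mhcX.
  - by move=> i w _; rewrite lee_fin hc_ge0.
  under eq_bigr do rewrite EY.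
  by rewrite sumEFin sumr_const card_ord mulr_natl.
have EY2 : (\int[P]_w (Y w ^+ 2)%:E <=
    (n%:R * (n%:R * (m * m)) + n%:R * (s * m))%:E)%E.
  have -> : (\int[P]_w (Y w ^+ 2)%:E =
      \int[P]_w (\sum_i \sum_k (hc s (X i w) * hc s (X k w))%:E))%E.
    apply: eq_integral => w _; rewrite /Y expr2 big_distrlr /= -sumEFin.
    by apply: eq_bigr => i _; rewrite sumEFin.
  rewrite ge0_integral_sum //; last 2 first.
  - move=> i; apply: emeasurable_sum => k; apply/measurable_EFinP.
    by apply: measurable_funM; exact: mhcX.
  - by move=> i w _; apply: sume_ge0 => k _; rewrite lee_fin mulr_ge0 ?hc_ge0.
  apply: (@le_trans _ _ (\sum_(i < n) \sum_(k < n)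
      (m * m + (if i == k then s * m else 0))%:E)%E).
    apply: lee_sum => i _.
    rewrite ge0_integral_sum //; last 2 first.
    - move=> k; apply/measurable_EFinP.
      by apply: measurable_funM; exact: mhcX.
    - by move=> k w _; rewrite lee_fin mulr_ge0 ?hc_ge0.
    by apply: lee_sum => k _; exact: EYY.
  rewrite le_eqVlt; apply/orP; left; apply/eqP.
  under eq_bigr do rewrite sumEFin.
  rewrite sumEFin; congr EFin.
  under eq_bigr do rewrite big_split /= sumr_const card_ord.
  rewrite big_split /= sumr_const card_ord; congr (_ + _); first by rewrite !mulr_natl.
  rewrite (eq_bigr (fun=> s * m)) ?sumr_const ?card_ord ?mulr_natl //.
  move=> i _; rewrite (bigD1 i) //= eqxx big1 ?addr0 //.
  by move=> k /negbTE; rewrite eq_sym => ->.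
set c := n%:R * m.
have c0 : 0 <= c by apply: mulr_ge0.
have key : (\int[P]_w (((Y w - c) ^+ 2)%:E + ((2 * c) * Y w)%:E) =
            \int[P]_w ((Y w ^+ 2)%:E + (c ^+ 2)%:E))%E.
  by apply: eq_integral => w _; rewrite -!EFinD; congr EFin; ring.
have mW : measurable_fun setT (fun w => ((Y w - c) ^+ 2)%:E).
  apply/measurable_EFinP; apply: measurable_funX; apply: measurable_funB => //.
rewrite ge0_integralD // in key; last 3 first.
- by move=> w _; rewrite lee_fin sqr_ge0.
- by move=> w _; rewrite lee_fin mulr_ge0 ?mulr_ge0.
- by apply/measurable_EFinP; apply: measurable_funM.
rewrite ge0_integralD // in key; last 3 first.
- by move=> w _; rewrite lee_fin sqr_ge0.
- by apply/measurable_EFinP; apply: measurable_funX.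
- by move=> w _; rewrite lee_fin sqr_ge0.
have PT : P [set: T] = 1%E by exact: probability_setT.
have Ic : (\int[P]_w (c ^+ 2)%:E = (c ^+ 2)%:E)%E.
  rewrite integral_cst //.
  apply: (@eq_trans _ _ ((c ^+ 2)%:E * 1)%E); last by rewrite mule1.
  exact: (congr1 (fun a => (c ^+ 2)%:E * a)%E PT).
have I2 : (\int[P]_w (2 * c * Y w)%:E = ((2 * c) * (n%:R * m))%:E)%E.
  under eq_integral do rewrite EFinM.
  rewrite ge0_integralZl_EFin //; last 3 first.
  - by move=> w _; rewrite lee_fin.
  - exact/measurable_EFinP.
  - by rewrite mulr_ge0.
  by rewrite EYsum -EFinM.
rewrite Ic I2 in key.
rewrite -/Y -(@leeD2rE _ ((2 * c) * (n%:R * m))%:E) //.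
rewrite key -EFinD.
apply: le_trans (leeD2r _ EY2) _.
rewrite -EFinD lee_fin /c.
rewrite le_eqVlt; apply/orP; left; apply/eqP; ring.
Qed.


Lemma mean_pos : mu [set x : R | x < 0] = 0%E -> (\int[mu]_x x%:E = 1)%E ->
  (\int[mu]_y (Num.max y 0)%:E = 1)%E.
Proof.
move=> neg mean.
have mN : measurable [set x : R | x < 0].
  by rewrite (_ : [set x : R | x < 0] = `]-oo, 0[%classic); [exact: measurable_itv|
    apply/seteqP; split => x /=; rewrite in_itv /=].
rewrite integralE in mean.
have N0 : (\int[mu]_x ((fun x : R => x%:E)^\- x) = 0)%E.
  rewrite (@ge0_negligible_integral _ _ _ mu setT [set x : R | x < 0]) //; last first.
    by apply: measurable_funeneg; apply/measurable_EFinP; exact: measurable_id.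
  rewrite (eq_integral (cst 0%E)) ?integral0 //.
  move=> x; rewrite inE /= => -[_ /negP]; rewrite -leNgt => x0.
  rewrite funenegE /=; apply/max_idPr; rewrite lee_fin oppr_le0 //.
rewrite N0 sube0 in mean; rewrite -mean.
by apply: eq_integral => x _; rewrite funeposE EFin_max.
Qed.

End Prob.


Section Ar.
Variable R : realType.

Lemma amgm (G W c s : R) : 0 < c -> 0 < s -> G <= W ->
  4 * Num.max G 0 / s <= 2 / (s * c) * W ^+ 2 + 2 * c / s.
Proof.
move=> c0 s0 GW.
have h : 2 * c * Num.max G 0 <= W ^+ 2 + c ^+ 2.
  have [G0|G0] := leP G 0.
    rewrite ?mulr0; apply: addr_ge0; exact: sqr_ge0.

  have : 0 <= (W - c) ^+ 2 by exact: sqr_ge0.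
  nra.
have -> : 4 * Num.max G 0 / s = 2 / (s * c) * (2 * c * Num.max G 0).
  by field; rewrite ?gt_eqF.
have -> : 2 / (s * c) * W ^+ 2 + 2 * c / s = 2 / (s * c) * (W ^+ 2 + c ^+ 2).
  by field; rewrite ?gt_eqF.
by apply: ler_wpM2l => //; apply: divr_ge0 => //; apply: mulr_ge0; apply: ltW.
Qed.

Lemma geom_sum (r : R) J :
  \sum_(j < J) 4 * r / 2 ^+ j.+1 = 4 * r - 4 * r / 2 ^+ J.
Proof.
elim: J => [|J IH]; first by rewrite big_ord0 expr0 divr1 subrr.
rewrite big_ord_recr /= IH exprS.
have h : (2:R) ^+ J != 0 by rewrite expf_neq0.
by field.
Qed.

Lemma final_arith (n : nat) (r : R) : 1 <= r -> r * r = n%:R ->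
  1 + \sum_(j < n) (2 * (2 ^+ j.+1 * r) / 4 ^+ j.+1 +
      2 / (4 ^+ j.+1 * (2 ^+ j.+1 * r)) * (n%:R * 4 ^+ j.+1))
  + n%:R / 4 ^+ n <= 5 * r.
Proof.
move=> r1 rr.
have p4 k : (4:R) ^+ k = 2 ^+ k * 2 ^+ k by rewrite -exprMn -natrM.
rewrite (@eq_bigr _ _ _ _ _ _ _ (fun j : 'I_n => 4 * r / 2 ^+ j.+1)); last first.
  move=> j _; rewrite p4 -rr.
  have h : (2:R) ^+ j.+1 != 0 by rewrite expf_neq0.
  have : r != 0 by rewrite gt_eqF // (lt_le_trans ltr01).
  move=> rn; field; by rewrite h rn.
rewrite (geom_sum r n).
suff : n%:R / 4 ^+ n <= 4 * r / 2 ^+ n by lra.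
have t0 : (0:R) < 2 ^+ n by apply: exprn_gt0.
rewrite p4 ler_pdivrMr ?mulr_gt0 // mulrA divfK ?gt_eqF //.
have : (n%:R : R) <= 2 ^+ n.
  by rewrite -natrX ler_nat ltnW // ltn_expl.
have : r <= n%:R by rewrite -rr ler_peMr // (le_trans ler01).
nra.
Qed.

End Ar.


Lemma le_integral_nm d (T : measurableType d) (R : realType)
  (mu : {measure set T -> \bar R}) (f g : T -> \bar R) :
  (forall x, 0 <= f x)%E -> (forall x, f x <= g x)%E ->
  (\int[mu]_x f x <= \int[mu]_x g x)%E.
Proof.
move=> f0 fg.
have g0 x : (0 <= g x)%E by apply: le_trans (fg x).
rewrite !ge0_integralTE//.
apply: le_ereal_sup => _ [h hf <-]; exists h => //= x.
exact: le_trans (hf x) (fg x).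
Qed.

Theorem mainTheorem14 (R : realType) (d : measure_display) (T : measurableType d)
  (P : probability T R) (mu : probability R R) (n : nat)
  (X : 'I_n -> {RV P >-> R}) :
  (0 < n)%N ->
  mu [set x : R | x < 0] = 0%E ->
  (\int[mu]_x x%:E = 1)%E ->
  @iid R d T P mu n X ->
  (\int[P]_w ((Delta (fun i => X i w))%:R)%:E <= (5 * Num.sqrt n%:R)%:E)%E.
Proof.
move=> n0 neg mean hiid.
set r := Num.sqrt n%:R.
have rr : r * r = n%:R by rewrite -expr2 sqr_sqrtr.
have r1 : 1 <= r by rewrite -sqrtr1 ler_wsqrtr // ler1n.
pose s (j : nat) : R := 4 ^+ j.+1.
pose c (j : nat) : R := 2 ^+ j.+1 * r.
pose m (j : nat) := fine (\int[mu]_y (hc (s j) y)%:E).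
pose a j := 2 / (s j * c j).
pose b j := 2 * c j / s j.
pose W j w := \sum_i hc (s j) (X i w) - n%:R * m j.
have s0 j : 0 < s j by apply: exprn_gt0.
have c0 j : 0 < c j by apply: mulr_gt0; [apply: exprn_gt0|apply: lt_le_trans r1].
have mp := @mean_pos R mu neg mean.
have m01 j : 0 <= m j <= 1.
  have /andP[I0 Is] := @int_hc_bounds R mu (s j) (ltW (s0 j)).
  have Ifin : (\int[mu]_y (hc (s j) y)%:E)%E \is a fin_num.
    by rewrite ge0_fin_numE // (le_lt_trans Is) ?ltry.
  apply/andP; split; first exact: fine_ge0.
  rewrite -lee_fin /m fineK // -mp.
  apply: ge0_le_integral => //.
  - by move=> y _; rewrite lee_fin hc_ge0 // ltW.
  - by apply/measurable_EFinP; exact: mhc.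
  - by apply/measurable_EFinP; apply: measurable_maxr.
  - by move=> y _; rewrite lee_fin hc_lemax.
have pw w : (Delta (fun i => X i w))%:R <= (1 + \sum_(j < n) b j) +
    (\sum_(j < n) a j * W j w ^+ 2 + \sum_i Num.max (X i w) 0 / 4 ^+ n).
  have D := @det_main R n (fun i => X i w) n. apply: le_trans D _.
  rewrite /Abound.
  have h : \sum_(j < n) 4 * Num.max (\sum_i hc (4 ^+ j.+1) (X i w) - n%:R) 0 / 4 ^+ j.+1
      <= \sum_(j < n) (a j * W j w ^+ 2 + b j).
    apply: ler_sum => j _; apply: amgm => //; rewrite /W lerD2l lerN2.
    have /andP[_ m1] := m01 j.
    by rewrite -{2}(mulr1 n%:R) ler_wpM2l.
  rewrite big_split /= in h.
  rewrite -mulr_suml.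
  lra.
have mW j : measurable_fun setT (W j).
  by apply: measurable_funB => //; exact: mYs.
pose F w := (((1 + \sum_(j < n) b j)%:E +
   (\sum_(j < n) (a j * W j w ^+ 2)%:E + \sum_i (Num.max (X i w) 0 / 4 ^+ n)%:E)))%E.
have a0 j : 0 <= a j by apply: divr_ge0 => //; apply: mulr_ge0; apply: ltW.
have b0 j : 0 <= b j by apply: divr_ge0; [apply: mulr_ge0 => //; apply: ltW|apply: ltW].
have p40 : (0:R) < 4 ^+ n by apply: exprn_gt0.
apply: (@le_trans _ _ (\int[P]_w F w)%E).
  apply: le_integral_nm => w; first by rewrite lee_fin.
  by rewrite /F !sumEFin -!EFinD lee_fin; exact: pw.
have mX i : measurable_fun setT (fun w => Num.max (X i w) 0).
  by apply: measurable_maxr => //; exact: measurable_funPT.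
rewrite /F ge0_integralD //; last 3 first.
- by move=> w _; rewrite lee_fin addr_ge0 // sumr_ge0.
- move=> w _; rewrite !sumEFin -EFinD lee_fin addr_ge0 //; apply: sumr_ge0 => *.
    by apply: mulr_ge0 => //; apply: sqr_ge0.
  by apply: divr_ge0; [rewrite le_max lexx orbT|apply: ltW].
- apply: emeasurable_funD; apply: emeasurable_sum => j; apply/measurable_EFinP.
    by apply: measurable_funM => //; apply: measurable_funX.
  by apply: measurable_funM.
have PT : P [set: T] = 1%E by exact: probability_setT.
have T1 : (\int[P]_w (1 + \sum_(j < n) b j)%:E = (1 + \sum_(j < n) b j)%:E)%E.
  rewrite integral_cst //.
  apply: (@eq_trans _ _ ((1 + \sum_(j < n) b j)%:E * 1)%E); last by rewrite mule1.
  exact: (congr1 (fun z => ((1 + \sum_(j < n) b j)%:E * z)%E) PT).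
rewrite T1 ge0_integralD //; last 4 first.
- by move=> w _; apply: sume_ge0 => j _; rewrite lee_fin mulr_ge0 // sqr_ge0.
- by apply: emeasurable_sum => j; apply/measurable_EFinP; apply: measurable_funM => //; apply: measurable_funX.
- by move=> w _; apply: sume_ge0 => i _; rewrite lee_fin divr_ge0 // ?le_max ?lexx ?orbT // ltW.
- by apply: emeasurable_sum => i; apply/measurable_EFinP; apply: measurable_funM.
rewrite !ge0_integral_sum //; last 4 first.
- by move=> i; apply/measurable_EFinP; apply: measurable_funM.
- by move=> i w _; rewrite lee_fin divr_ge0 // ?le_max ?lexx ?orbT // ltW.
- by move=> j; apply/measurable_EFinP; apply: measurable_funM => //; apply: measurable_funX.
- by move=> j w _; rewrite lee_fin mulr_ge0 // sqr_ge0.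
have T2 : (\sum_(j < n) \int[P]_w (a j * W j w ^+ 2)%:E <=
    \sum_(j < n) (a j * (n%:R * s j))%:E)%E.
  apply: lee_sum => j _.
  under eq_integral do rewrite EFinM.
  rewrite ge0_integralZl_EFin //; last 2 first.
  - by move=> w _; rewrite lee_fin sqr_ge0.
  - by apply/measurable_EFinP; apply: measurable_funX.
  have S := @second R d T P mu n X hiid (s j) (ltW (s0 j)).
  apply: le_trans (lee_wpmul2l _ S) _; first by rewrite lee_fin.
  rewrite -EFinM lee_fin ler_wpM2l //.
  have /andP[m0 m1] := m01 j.
  rewrite -[leRHS]mulr1 ler_wpM2l //.
  by apply: mulr_ge0 => //; apply: ltW.
have T3 : (\sum_i \int[P]_w (Num.max (X i w) 0 / 4 ^+ n)%:E = (n%:R / 4 ^+ n)%:E)%E.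
  have E1 i : (\int[P]_w (Num.max (X i w) 0 / 4 ^+ n)%:E = (1 / 4 ^+ n)%:E)%E.
    under eq_integral do rewrite EFinM.
    rewrite ge0_integralZr //; last 2 first.
    - by apply/measurable_EFinP.
    - by move=> w _; rewrite lee_fin le_max lexx orbT.
    rewrite (@transfer R d T P mu n X hiid i (fun y => Num.max y 0)) //; last 2 first.
    - exact: measurable_maxr.
    - by move=> y; rewrite le_max lexx orbT.
    by rewrite mp -EFinM.
  under eq_bigr do rewrite E1.
  by rewrite sumEFin sumr_const card_ord div1r mulr_natl.
rewrite T3.
apply: le_trans (leeD2l _ (leeD2r _ T2)) _.
rewrite sumEFin -!EFinD lee_fin.
have := @final_arith R n r r1 rr.
rewrite big_split /=; rewrite -/(s _) -/(c _). move=> H. Show. lra.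

Qed.
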